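(* Fix $\sigma^2>0$. For $\delta>0$ let $\rho_0=\frac{\delta}{1+\sigma^2}$ and define $\phi^{-1}_\delta:[0,\infty)\to\mathbb R$ by $\phi^{-1}_\delta(\rho)=1$ for $0\le\rho<\rho_0$ and $\phi^{-1}_\delta(\rho)=\frac{\delta}{\rho}-\sigma^2$ for $\rho\ge\rho_0$. Let $$\mathrm{mmse}(\mathcal B,\rho)=1-\int_{-\infty}^{\infty}\frac{e^{-x^2/2}}{\sqrt{2\pi}}\tanh\!\left(\rho-\sqrt{\rho}\,x\right)\mathrm{d}x,$$ let $\psi^{opt}_{\mathcal B}(\rho)=\min\{\phi^{-1}_\delta(\rho),\mathrm{mmse}(\mathcal B,\rho)\}$, and $$a_{\mathcal B}(\delta)=\int_0^\infty\big(\phi^{-1}_\delta(\rho)-\psi^{opt}_{\mathcal B}(\rho)\big)\,\mathrm d\rho .$$ Define $R_{\mathrm{AC}}(\delta)=C_{\mathrm G}-\frac{a_{\mathcal B}(\delta)}{2\delta}$ with $C_{\mathrm G}=\frac12\ln(1+1/\sigma^2)$. Then $a_{\mathcal B}(\delta)/(2\delta)\to0$, i.e. $R_{\mathrm{AC}}(\delta)\to C_{\mathrm G}$, as $\delta\to0$.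
   Context: $\mathrm{mmse}(\mathcal B,\rho)$ is the minimum mean-squared error of estimating a uniformly distributed $s\in\{+1,-1\}$ from $\sqrt\rho\,s+w$ with $w\sim\mathcal N(0,1)$ independent of $s$. $\phi^{-1}_\delta$ is the (extended) inverse of $\phi(v)=\delta/(v+\sigma^2)$, $v\in[0,1]$. In the paper's interpretation, $R_{\mathrm{AC}}$ is the rate of a compressed coding scheme with BPSK whose decoder transfer curve meets the matching condition $\psi=\psi^{opt}_{\mathcal B}$, and $\delta\to0$ is taken together with the underlying code rate $R_{\mathrm C}=\delta R_{\mathrm{AC}}\to0$. *)

(* Defs.v *)
From Stdlib Require Import Reals Lra ClassicalEpsilon.
Open Scope R_scope.

Definition Rint (f : R -> R) (a b v : R) : Prop :=
  exists pr : Riemann_integrable f a b, RiemannInt pr = v.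

Definition improper_int_0_inf (f : R -> R) (l : R) : Prop :=
  (forall b, 0 <= b -> exists v, Rint f 0 b v) /\
  (forall eps, 0 < eps -> exists M, forall b v,
      M <= b -> Rint f 0 b v -> Rabs (v - l) < eps).

Definition improper_int_R (f : R -> R) (l : R) : Prop :=
  (forall a b, a <= b -> exists v, Rint f a b v) /\
  (forall eps, 0 < eps -> exists M, forall a b v,
      a <= - M -> M <= b -> Rint f a b v -> Rabs (v - l) < eps).

(* The value of a convergent improper integral (chosen by epsilon;
   meaningful whenever the integral converges, since the limit is unique). *)
Definition int_0_inf (f : R -> R) : R :=
  epsilon (inhabits 0) (fun l => improper_int_0_inf f l).

Definition int_R (f : R -> R) : R :=
  epsilon (inhabits 0) (fun l => improper_int_R f l).

(* Extended inverse of phi(v) = delta/(v + sigma2), v in [0,1]. *)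
Definition phi_inv (sigma2 delta rho : R) : R :=
  let rho0 := delta / (1 + sigma2) in
  if Rlt_dec rho rho0 then 1 else delta / rho - sigma2.

Definition gauss (x : R) : R := exp (- x ^ 2 / 2) / sqrt (2 * PI).

Definition mmse_B (rho : R) : R :=
  1 - int_R (fun x => gauss x * tanh (rho - sqrt rho * x)).

Definition psi_opt_B (sigma2 delta rho : R) : R :=
  Rmin (phi_inv sigma2 delta rho) (mmse_B rho).

Definition a_B (sigma2 delta : R) : R :=
  int_0_inf (fun rho => phi_inv sigma2 delta rho - psi_opt_B sigma2 delta rho).

Definition C_G (sigma2 : R) : R := / 2 * ln (1 + / sigma2).

Definition R_AC (sigma2 delta : R) : R := C_G sigma2 - a_B sigma2 delta / (2 * delta).

(* Main.v *)
Require Import Defs.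
From Stdlib Require Import Reals.
Open Scope R_scope.
From Stdlib Require Import Reals Lra Classical ClassicalEpsilon.
From Coquelicot Require Import Coquelicot.
Open Scope R_scope.

Lemma RInt_ChaslesR (f : R -> R) a b c : ex_RInt f a b -> ex_RInt f b c ->
  RInt f a b + RInt f b c = RInt f a c.
Proof. intros H1 H2. exact (RInt_Chasles (V:=R_CompleteNormedModule) f a b c H1 H2). Qed.

Lemma eqR_conv (a b : R) : @eq R a b -> a = b.
Proof. auto. Qed.
Ltac req := apply eqR_conv.

Lemma exR (f : R -> R) : (forall x, continuous f x) -> forall a b, ex_RInt f a b.
Proof. intros H a b; apply (ex_RInt_continuous (V:=R_CompleteNormedModule)); intros; apply H. Qed.

Lemma cder (f : R -> R) x : ex_derive f x -> continuous f x.
Proof. apply (ex_derive_continuous (K:=R_AbsRing) (V:=R_NormedModule)). Qed.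

Lemma RInt_scalR (f : R -> R) a b c : ex_RInt f a b -> RInt (fun t => c * f t) a b = c * RInt f a b.
Proof. intros H. exact (RInt_scal (V:=R_CompleteNormedModule) f a b c H). Qed.
Lemma RInt_plusR (f g : R -> R) a b : ex_RInt f a b -> ex_RInt g a b ->
  RInt (fun t => f t + g t) a b = RInt f a b + RInt g a b.
Proof. intros H1 H2. exact (RInt_plus (V:=R_CompleteNormedModule) f g a b H1 H2). Qed.
Lemma RInt_minusR (f g : R -> R) a b : ex_RInt f a b -> ex_RInt g a b ->
  RInt (fun t => f t - g t) a b = RInt f a b - RInt g a b.
Proof. intros H1 H2. exact (RInt_minus (V:=R_CompleteNormedModule) f g a b H1 H2). Qed.
Lemma RInt_linR (f : R -> R) u v a b : ex_RInt f (u*a+v) (u*b+v) -> RInt (fun y => u * f (u*y+v)) a b = RInt f (u*a+v) (u*b+v).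
Proof. intros H. exact (RInt_comp_lin (V:=R_CompleteNormedModule) f u v a b H). Qed.
Lemma ex_RInt_linR (f : R -> R) u v a b : ex_RInt f (u*a+v) (u*b+v) -> ex_RInt (fun y => u * f (u*y+v)) a b.
Proof. intros H. exact (ex_RInt_comp_lin (V:=R_CompleteNormedModule) f u v a b H). Qed.

Definition E (t : R) := exp (- (t * t)).
Lemma E_cont x : continuous E x.
Proof. apply cder; unfold E; auto_derive; auto. Qed.

Definition Ig (x : R) := RInt E 0 x.
Definition Uf (u t : R) := exp (- (u * u) * (1 + t * t)) / (1 + t * t).
Definition U (x : R) := RInt (fun t => Uf x t) 0 1.

Lemma opt_pos t : 0 < 1 + t * t.
Proof. nra. Qed.

Lemma Uf_der u t : is_derive (fun z => Uf z t) u (- 2 * u * exp (- (u * u) * (1 + t * t))).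
Proof.
  unfold Uf. pose proof (opt_pos t).
  auto_derive. lra. field. lra.
Qed.

Lemma Uf_cont_t u t : continuous (fun t => Uf u t) t.
Proof. apply cder; unfold Uf; auto_derive. pose proof (opt_pos t); lra. Qed.

Lemma U_der (x : R) : is_derive U x (- 2 * exp (- (x * x)) * Ig x).
Proof.
  assert (H := is_derive_RInt_param Uf 0 1 x).
  unfold U.
  replace (- 2 * exp (- (x * x)) * Ig x) with
    (RInt (fun t => Derive (fun u => Uf u t) x) 0 1).
  apply H.
  - apply filter_forall. intros y t _. eexists. apply Uf_der.
  - intros t _.
    apply continuity_2d_pt_ext with (f := fun u v => - 2 * u * exp (- (u * u) * (1 + v * v))).
    { intros u v. symmetry. apply is_derive_unique, Uf_der. }
    apply continuity_2d_pt_mult.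
    apply continuity_2d_pt_mult. apply continuity_2d_pt_const. apply continuity_2d_pt_id1.
    apply continuity_1d_2d_pt_comp. apply derivable_continuous_pt, derivable_pt_exp.
    apply continuity_2d_pt_mult. apply continuity_2d_pt_opp, continuity_2d_pt_mult; apply continuity_2d_pt_id1.
    apply continuity_2d_pt_plus. apply continuity_2d_pt_const.
    apply continuity_2d_pt_mult; apply continuity_2d_pt_id2.
  - apply filter_forall. intros y. apply exR. apply Uf_cont_t.
  - rewrite (RInt_ext _ (fun t => (- 2 * exp (- (x * x))) * (x * E (x * t + 0)))).
    rewrite RInt_scalR. rewrite RInt_linR. unfold Ig. rewrite Rmult_0_r, Rplus_0_r, Rmult_1_r, Rplus_0_r. reflexivity.
    apply exR, E_cont.
    apply ex_RInt_linR. apply exR, E_cont.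
    intros t _. transitivity (- 2 * x * exp (- (x * x) * (1 + t * t))). apply is_derive_unique, Uf_der.
    unfold E.
    replace (- ((x * t + 0) * (x * t + 0))) with (- (x*x) * (t*t)) by ring.
    replace (- (x * x) * (1 + t * t)) with (- (x*x) + - (x*x) * (t*t)) by ring.
    rewrite exp_plus. match goal with |- ?a = ?b => change (@eq R a b) end. ring.
Qed.

Lemma Ig_der (x : R) : is_derive Ig x (E x).
Proof.
  apply is_derive_RInt with (a := 0). apply filter_forall. intros b.
  apply RInt_correct. apply exR, E_cont. apply E_cont.
Qed.

Definition hh x := U x + Ig x * Ig x.
Lemma hh_der (x : R) : is_derive hh x 0.
Proof.
  unfold hh.
  assert (H : is_derive (fun y => U y + Ig y * Ig y) x
     (- 2 * exp (- (x * x)) * Ig x + (E x * Ig x + Ig x * E x))).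
  { apply (is_derive_plus (K:=R_AbsRing) (V:=R_NormedModule)). apply U_der.
    apply (is_derive_mult (K:=R_AbsRing)). apply Ig_der. apply Ig_der.
    intros; apply Rmult_comm. }
  replace 0 with (- 2 * exp (- (x * x)) * Ig x + (E x * Ig x + Ig x * E x)). exact H.
  unfold E. ring.
Qed.

Lemma hh_const (x : R) : hh x = hh 0.
Proof.
  destruct (MVT_gen hh 0 x (fun _ => 0)) as [c [_ Hc]].
  - intros; apply hh_der.
  - intros. apply continuity_pt_filterlim. apply cder. eexists; apply hh_der.
  - lra.
Qed.

Lemma U_ge0 x : 0 <= U x.
Proof.
  unfold U. apply RInt_ge_0. lra. apply exR, Uf_cont_t.
  intros t _. unfold Uf. apply Rlt_le, Rdiv_lt_0_compat. apply exp_pos. apply opt_pos.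
Qed.

Lemma hh0 : hh 0 = PI / 4.
Proof.
  unfold hh, Ig. rewrite RInt_point. unfold U.
  rewrite (RInt_ext _ (fun t => / (1 + t ^ 2))).
  rewrite <- atan_1. replace (atan 1) with (atan 1 - atan 0).
  2:{ rewrite atan_0; ring. }
  match goal with |- ?a + ?b = ?c => replace b with 0 end.
  2:{ unfold zero; simpl. ring. }
  rewrite Rplus_0_r.
  apply is_RInt_unique.
  apply (is_RInt_derive (V:=R_CompleteNormedModule) atan).
  - intros. apply is_derive_Reals. apply derivable_pt_lim_atan.
  - intros. apply cder. auto_derive. pose proof (pow2_ge_0 x). lra.
  - intros t _. unfold Uf. replace (- (0*0) * (1 + t*t)) with 0 by ring. rewrite exp_0. simpl. field. pose proof (opt_pos t). lra.
Qed.

Lemma Ig_sq x : Ig x * Ig x <= PI / 4.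
Proof.
  rewrite <- hh0, <- (hh_const x). unfold hh. pose proof (U_ge0 x). lra.
Qed.

Lemma cpt (f : R -> R) x : continuity_pt f x -> continuous f x.
Proof. apply continuity_pt_filterlim. Qed.
Lemma ptc (f : R -> R) x : continuous f x -> continuity_pt f x.
Proof. apply continuity_pt_filterlim. Qed.

Lemma Ig_abs y : Rabs (Ig y) <= sqrt PI / 2.
Proof.
  pose proof (Ig_sq y). pose proof PI_RGT_0.
  pose proof (sqrt_sqrt PI (Rlt_le _ _ H0)). pose proof (sqrt_pos PI).
  apply Rabs_le. split; nra.
Qed.

Lemma E_int_bound k a b : 0 < k -> a <= b ->
  RInt (fun t => exp (- ((k * t) * (k * t)))) a b <= sqrt PI / k.
Proof.
  intros Hk Hab.
  assert (Heq : RInt (fun t => exp (- ((k * t) * (k * t)))) a b =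
          / k * RInt (fun y => k * E (k * y + 0)) a b).
  { rewrite <- RInt_scalR. apply RInt_ext. intros x _. unfold E.
    rewrite Rplus_0_r. req. field. lra.
    apply ex_RInt_linR. apply exR, E_cont. }
  rewrite Heq, RInt_linR by (apply exR, E_cont).
  assert (H : RInt E (k * a + 0) (k * b + 0) = Ig (k*b+0) - Ig (k*a+0)).
  { unfold Ig. rewrite <- (RInt_ChaslesR E 0 (k*a+0) (k*b+0)).
    lra. all: apply exR, E_cont. }
  rewrite H.
  pose proof (Ig_abs (k*a+0)). pose proof (Ig_abs (k*b+0)).
  apply Rabs_le_between in H0. apply Rabs_le_between in H1.
  apply Rmult_le_reg_l with k. lra.
  replace (k * (sqrt PI / k)) with (sqrt PI) by (field; lra).
  replace (k * (/ k * (Ig (k * b + 0) - Ig (k * a + 0)))) with (Ig (k*b+0) - Ig (k * a + 0)) by (field; lra).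
  lra.
Qed.

Lemma s2pi_pos : 0 < sqrt (2 * PI).
Proof. apply sqrt_lt_R0. pose proof PI_RGT_0. lra. Qed.

Lemma gauss_pos x : 0 < gauss x.
Proof. unfold gauss. apply Rdiv_lt_0_compat. apply exp_pos. apply s2pi_pos. Qed.

Lemma gauss_cont x : continuous gauss x.
Proof. apply cder. unfold gauss. auto_derive. pose proof s2pi_pos. lra. Qed.

Lemma sqrt2_sq : sqrt 2 * sqrt 2 = 2.
Proof. apply sqrt_sqrt. lra. Qed.

Lemma s2pi_eq : sqrt (2 * PI) = sqrt 2 * sqrt PI.
Proof. apply sqrt_mult; pose proof PI_RGT_0; lra. Qed.

Lemma gauss_int_le1 a b : a <= b -> RInt gauss a b <= 1.
Proof.
  intros Hab.
  assert (Hs : 0 < sqrt 2) by (apply sqrt_lt_R0; lra).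
  pose proof (sqrt_lt_R0 PI PI_RGT_0) as Hp.
  rewrite (RInt_ext _ (fun x => / sqrt (2*PI) * exp (- ((/ sqrt 2 * x) * (/ sqrt 2 * x))))).
  rewrite RInt_scalR.
  2: { apply exR. intros x. apply cder. auto_derive. auto. }
  pose proof (E_int_bound (/ sqrt 2) a b (Rinv_0_lt_compat _ Hs) Hab).
  apply Rle_trans with (/ sqrt (2 * PI) * (sqrt PI / / sqrt 2)).
  apply Rmult_le_compat_l. left; apply Rinv_0_lt_compat, s2pi_pos. exact H.
  rewrite s2pi_eq. right. field. lra.
  intros x _. unfold gauss. req.
  assert (E1 : - (/ sqrt 2 * x * (/ sqrt 2 * x)) = - x ^ 2 / 2).
  { replace (/ sqrt 2 * x * (/ sqrt 2 * x)) with (x*x / (sqrt 2 * sqrt 2)) by (field; lra).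
    rewrite sqrt2_sq. field. }
  rewrite E1. unfold Rdiv. ring.
Qed.

Definition g4 x := exp (- (x * x) / 4) / sqrt (2 * PI).

Lemma g4_cont x : continuous g4 x.
Proof. apply cder. unfold g4. auto_derive. pose proof s2pi_pos. lra. Qed.

Lemma g4_int_le a b : a <= b -> RInt g4 a b <= sqrt 2.
Proof.
  intros Hab.
  assert (Hs : 0 < sqrt 2) by (apply sqrt_lt_R0; lra).
  pose proof (sqrt_lt_R0 PI PI_RGT_0) as Hp.
  rewrite (RInt_ext _ (fun x => / sqrt (2*PI) * exp (- ((/ 2 * x) * (/ 2 * x))))).
  rewrite RInt_scalR.
  2: { apply exR. intros x. apply cder. auto_derive. auto. }
  assert (H2 : 0 < / 2) by lra.
  pose proof (E_int_bound (/ 2) a b H2 Hab).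
  apply Rle_trans with (/ sqrt (2 * PI) * (sqrt PI / / 2)).
  apply Rmult_le_compat_l. left; apply Rinv_0_lt_compat, s2pi_pos. exact H.
  rewrite s2pi_eq. right.
  replace (/ (sqrt 2 * sqrt PI) * (sqrt PI / / 2)) with (2 / sqrt 2) by (field; lra).
  rewrite <- sqrt2_sq at 1. field. lra.
  intros x _. unfold g4. req.
  replace (- (/ 2 * x * (/ 2 * x))) with (- (x * x) / 4) by field. unfold Rdiv. ring.
Qed.

Lemma absx_gauss x : Rabs x * gauss x <= g4 x.
Proof.
  unfold gauss, g4. unfold Rdiv. rewrite <- Rmult_assoc.
  apply Rmult_le_compat_r. left; apply Rinv_0_lt_compat, s2pi_pos.
  replace (- x ^ 2 * / 2) with (- (x * x) * / 4 + - (x * x) * / 4) by field.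
  rewrite exp_plus.
  assert (HA : exp (- (x * x) * / 4) * exp (x * x * / 4) = 1).
  { rewrite <- exp_plus. replace (- (x * x) * / 4 + x * x * / 4) with 0 by ring. apply exp_0. }
  pose proof (exp_pos (- (x * x) * / 4)).
  pose proof (exp_ineq1_le (x * x * / 4)).
  assert (Rabs x <= 1 + x * x * / 4).
  { pose proof (pow2_ge_0 (1 - x/2)). pose proof (pow2_ge_0 (1 + x/2)). destruct (Rle_dec 0 x). rewrite Rabs_right by lra. nra. rewrite Rabs_left by lra. nra. }
  pose proof (Rabs_pos x).
  nra.
Qed.

Lemma tanh_eq u : tanh u = (exp u - exp (- u)) / (exp u + exp (- u)).
Proof.
  unfold tanh, sinh, cosh. pose proof (exp_pos u). pose proof (exp_pos (- u)).
  field. lra.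
Qed.

Lemma tanh_abs u : Rabs (tanh u) <= 1.
Proof.
  rewrite tanh_eq. pose proof (exp_pos u). pose proof (exp_pos (- u)).
  rewrite Rabs_div by lra. rewrite (Rabs_right (exp u + exp (- u))) by lra.
  apply Rmult_le_reg_r with (exp u + exp (- u)). lra.
  unfold Rdiv. rewrite Rmult_assoc, Rinv_l, Rmult_1_r, Rmult_1_l by lra.
  apply Rabs_le. lra.
Qed.

Lemma tanh_0 : tanh 0 = 0.
Proof. rewrite tanh_eq, Ropp_0. unfold Rminus. rewrite Rplus_opp_r. unfold Rdiv. ring. Qed.

Lemma tanh_der (u : R) : is_derive tanh u (4 / (exp u + exp (- u)) ^ 2).
Proof.
  pose proof (exp_pos u). pose proof (exp_pos (- u)).
  apply (is_derive_ext (fun u => (exp u - exp (- u)) / (exp u + exp (- u)))).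
  { intros t. symmetry. apply tanh_eq. }
  auto_derive. lra.
  assert (exp u * exp (- u) = 1). { rewrite <- exp_plus. rewrite Rplus_opp_r. apply exp_0. }
  field_simplify. 2: lra. 2: lra. rewrite Rmult_assoc, H1. field. nra.
Qed.

Lemma tanh_cont u : continuity_pt tanh u.
Proof. apply ptc, cder. eexists. apply tanh_der. Qed.

Lemma tanh_lip u v : Rabs (tanh u - tanh v) <= Rabs (u - v).
Proof.
  destruct (MVT_gen tanh v u (fun c => 4 / (exp c + exp (- c)) ^ 2)) as [c [_ Hc]].
  - intros; apply tanh_der.
  - intros; apply tanh_cont.
  - rewrite Hc, Rabs_mult. rewrite <- (Rmult_1_l (Rabs (u - v))) at 2.
    apply Rmult_le_compat_r. apply Rabs_pos.
    pose proof (exp_pos c). pose proof (exp_pos (- c)).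
    assert (exp c * exp (- c) = 1). { rewrite <- exp_plus. rewrite Rplus_opp_r. apply exp_0. }
    assert (Hp : 0 < (exp c + exp (- c)) ^ 2) by (apply pow_lt; lra).
    rewrite Rabs_right. 2: { apply Rle_ge, Rlt_le, Rdiv_lt_0_compat; lra. }
    apply Rmult_le_reg_r with ((exp c + exp (- c)) ^ 2). exact Hp.
    unfold Rdiv. rewrite Rmult_assoc, Rinv_l, Rmult_1_r, Rmult_1_l by lra.
    pose proof (pow2_ge_0 (exp c - exp (- c))). nra.
Qed.

Lemma Rint_of (f : R -> R) a b : ex_RInt f a b -> Rint f a b (RInt f a b).
Proof. intros H. exists (ex_RInt_Reals_0 _ _ _ H). symmetry. apply RInt_Reals. Qed.

Lemma Rint_val (f : R -> R) a b v : Rint f a b v -> v = RInt f a b.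
Proof. intros [pr <-]. symmetry. apply RInt_Reals. Qed.

Lemma RInt_nonneg (p : R -> R) a b : (forall x, 0 <= p x) -> (forall x, continuous p x) ->
  a <= b -> 0 <= RInt p a b.
Proof. intros H1 H2 H. apply RInt_ge_0; auto. apply exR; auto. Qed.

Lemma RInt_mono_sub (p : R -> R) a a0 b0 b : (forall x, 0 <= p x) -> (forall x, continuous p x) ->
  a <= a0 -> a0 <= b0 -> b0 <= b -> RInt p a0 b0 <= RInt p a b.
Proof.
  intros H1 H2 h1 h2 h3.
  rewrite <- (RInt_ChaslesR p a a0 b), <- (RInt_ChaslesR p a0 b0 b).
  pose proof (RInt_nonneg p a a0 H1 H2 h1). pose proof (RInt_nonneg p b0 b H1 H2 h3). lra.
  all: apply exR; auto.
Qed.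

Lemma imp_nonneg (p : R -> R) B : (forall x, continuous p x) -> (forall x, 0 <= p x) ->
  (forall a b, a <= b -> RInt p a b <= B) -> exists l, improper_int_R p l.
Proof.
  intros Hc Hp HB.
  set (S := fun y => exists a b, a <= b /\ y = RInt p a b).
  destruct (completeness S) as [l [Hub Hlub]].
  { exists B. intros y [a [b [h ->]]]. auto. }
  { exists (RInt p 0 0). exists 0, 0. split; auto; lra. }
  exists l. split.
  - intros a b _. exists (RInt p a b). apply Rint_of, exR, Hc.
  - intros eps Heps.
    assert (Hex : exists a0 b0, a0 <= b0 /\ l - eps < RInt p a0 b0).
    { apply NNPP. intros Hn. assert (l <= l - eps). 2: lra.
      apply Hlub. intros y [a [b [h ->]]].
      apply Rnot_lt_le. intros Hlt. apply Hn. exists a, b. split; auto. }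
    destruct Hex as [a0 [b0 [h0 Hlt]]].
    exists (Rmax (Rabs a0) (Rabs b0)). intros a b v Ha Hb Hv.
    apply Rint_val in Hv. subst v.
    assert (Ha0 : a <= a0). { pose proof (Rle_abs (- a0)). rewrite Rabs_Ropp in H. pose proof (Rmax_l (Rabs a0) (Rabs b0)). lra. }
    assert (Hb0 : b0 <= b). { pose proof (Rle_abs b0). pose proof (Rmax_r (Rabs a0) (Rabs b0)). lra. }
    pose proof (RInt_mono_sub p a a0 b0 b Hp Hc Ha0 h0 Hb0).
    assert (RInt p a b <= l). { apply Hub. exists a, b. split; auto; lra. }
    apply Rabs_lt_between. lra.
Qed.

Lemma imp_minus (p q : R -> R) lp lq : (forall x, continuous p x) -> (forall x, continuous q x) ->
  improper_int_R p lp -> improper_int_R q lq -> improper_int_R (fun x => p x - q x) (lp - lq).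
Proof.
  intros Hp Hq [_ H1] [_ H2]. split.
  - intros a b _. exists (RInt (fun x => p x - q x) a b). apply Rint_of. apply exR.
    intros x. apply cpt. apply continuity_pt_minus; apply ptc; auto.
  - intros eps Heps.
    destruct (H1 (eps/2)) as [M1 HM1]. lra.
    destruct (H2 (eps/2)) as [M2 HM2]. lra.
    exists (Rmax M1 M2). intros a b v Ha Hb Hv.
    apply Rint_val in Hv. subst v.
    pose proof (Rmax_l M1 M2). pose proof (Rmax_r M1 M2).
    assert (E1 : RInt (fun x => p x - q x) a b = RInt p a b - RInt q a b).
    { exact (RInt_minus (V:=R_CompleteNormedModule) p q a b (exR p Hp a b) (exR q Hq a b)). }
    rewrite E1.
    assert (A1 := HM1 a b (RInt p a b) ltac:(lra) ltac:(lra) (Rint_of _ _ _ (exR p Hp a b))).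
    assert (A2 := HM2 a b (RInt q a b) ltac:(lra) ltac:(lra) (Rint_of _ _ _ (exR q Hq a b))).
    apply Rabs_lt_between in A1. apply Rabs_lt_between in A2. apply Rabs_lt_between. lra.
Qed.

Lemma imp_ext (f g : R -> R) l : (forall x, f x = g x) -> improper_int_R f l -> improper_int_R g l.
Proof.
  intros H. replace g with f. auto. apply FunctionalExtensionality.functional_extensionality. auto.
Qed.

Lemma imp_dom (g h : R -> R) B : (forall x, continuous g x) -> (forall x, continuous h x) ->
  (forall x, Rabs (g x) <= h x) -> (forall a b, a <= b -> RInt h a b <= B) ->
  exists l, improper_int_R g l.
Proof.
  intros Hg Hh Hgh HB.
  assert (Hc : forall x, continuous (fun x => g x + h x) x).
  { intros x. apply cpt. apply continuity_pt_plus; apply ptc; auto. }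
  destruct (imp_nonneg (fun x => g x + h x) (B + B) Hc) as [l1 H1].
  { intros x. pose proof (Hgh x). apply Rabs_le_between in H. pose proof (Rabs_pos (g x)). lra. }
  { intros a b Hab. apply Rle_trans with (RInt (fun x => h x + h x) a b).
    apply RInt_le; auto. apply exR; auto. apply exR. intros x; apply cpt, continuity_pt_plus; apply ptc; auto.
    intros x _. pose proof (Hgh x). apply Rabs_le_between in H. lra.
    rewrite (RInt_plusR h h a b (exR h Hh a b) (exR h Hh a b)).
    pose proof (HB a b Hab). lra. }
  destruct (imp_nonneg h B Hh) as [l2 H2]; auto.
  { intros x. pose proof (Hgh x). pose proof (Rabs_pos (g x)). lra. }
  exists (l1 - l2). apply (imp_ext (fun x => (g x + h x) - h x)). intros; ring.
  apply imp_minus; auto.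
Qed.

Lemma imp_abs_bound (g : R -> R) l C : improper_int_R g l ->
  (forall a b, a <= b -> Rabs (RInt g a b) <= C) -> Rabs l <= C.
Proof.
  intros [H0 H1] HC. apply Rnot_lt_le. intros Hlt.
  destruct (H1 (Rabs l - C)) as [M HM]. lra.
  destruct (H0 (- Rabs M) (Rabs M)) as [v Hv]. pose proof (Rabs_pos M). lra.
  assert (HMa : - Rabs M <= - M) by (pose proof (Rle_abs M); lra).
  pose proof (HM _ _ _ HMa (Rle_abs M) Hv).
  apply Rint_val in Hv. subst v.
  pose proof (HC (- Rabs M) (Rabs M) ltac:(pose proof (Rabs_pos M); lra)).
  pose proof (Rabs_triang_inv l (RInt g (- Rabs M) (Rabs M))).
  rewrite Rabs_minus_sym in H. lra.
Qed.

Lemma imp_le (g : R -> R) l C : improper_int_R g l ->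
  (forall a b, a <= b -> RInt g a b <= C) -> l <= C.
Proof.
  intros [H0 H1] HC. apply Rnot_lt_le. intros Hlt.
  destruct (H1 (l - C)) as [M HM]. lra.
  destruct (H0 (- Rabs M) (Rabs M)) as [v Hv]. pose proof (Rabs_pos M). lra.
  assert (HMa : - Rabs M <= - M) by (pose proof (Rle_abs M); lra).
  pose proof (HM _ _ _ HMa (Rle_abs M) Hv).
  apply Rint_val in Hv. subst v.
  pose proof (HC (- Rabs M) (Rabs M) ltac:(pose proof (Rabs_pos M); lra)).
  apply Rabs_lt_between in H. lra.
Qed.

Lemma imp_intR (g : R -> R) l : improper_int_R g l -> improper_int_R g (int_R g).
Proof. intros H. unfold int_R. apply epsilon_spec. exists l. exact H. Qed.

Lemma cpt_const (c x : R) : continuity_pt (fun _ => c) x.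
Proof. apply continuity_pt_const. intros ? ?; reflexivity. Qed.

Definition fr (rho x : R) := gauss x * tanh (rho - sqrt rho * x).
Definition L (rho : R) := int_R (fun x => gauss x * tanh (rho - sqrt rho * x)).

Lemma fr_cont rho x : continuous (fr rho) x.
Proof.
  apply cpt. unfold fr. apply continuity_pt_mult. apply ptc, gauss_cont.
  apply (continuity_pt_comp (fun x => rho - sqrt rho * x) tanh).
  apply ptc, cder. auto_derive. auto. apply tanh_cont.
Qed.

Lemma fr_dom rho x : Rabs (fr rho x) <= gauss x.
Proof.
  unfold fr. rewrite Rabs_mult. rewrite (Rabs_right (gauss x)) by (apply Rle_ge, Rlt_le, gauss_pos).
  pose proof (tanh_abs (rho - sqrt rho * x)). pose proof (gauss_pos x).
  rewrite <- (Rmult_1_r (gauss x)) at 2. apply Rmult_le_compat_l; lra.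
Qed.

Lemma L_spec rho : improper_int_R (fr rho) (L rho).
Proof.
  destruct (imp_dom (fr rho) gauss 1) as [l Hl].
  apply fr_cont. apply gauss_cont. apply fr_dom. apply gauss_int_le1.
  apply (imp_intR _ l Hl).
Qed.

Lemma L_le1 rho : L rho <= 1.
Proof.
  apply (imp_le (fr rho) _ 1 (L_spec rho)). intros a b Hab.
  apply Rle_trans with (RInt gauss a b). apply RInt_le; auto.
  apply exR, fr_cont. apply exR, gauss_cont.
  intros x _. pose proof (fr_dom rho x). apply Rabs_le_between in H. lra.
  apply gauss_int_le1; auto.
Qed.

Lemma L_lip r s : Rabs (L r - L s) <= Rabs (r - s) + sqrt 2 * Rabs (sqrt r - sqrt s).
Proof.
  apply (imp_abs_bound (fun x => fr r x - fr s x)).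
  apply imp_minus. apply fr_cont. apply fr_cont. apply L_spec. apply L_spec.
  intros a b Hab.
  set (c1 := Rabs (r - s)). set (c2 := Rabs (sqrt r - sqrt s)).
  assert (Hc : forall x, continuous (fun x => fr r x - fr s x) x).
  { intros x. apply cpt, continuity_pt_minus; apply ptc, fr_cont. }
  assert (Hk : forall x, continuous (fun x => c1 * gauss x + c2 * g4 x) x).
  { intros x. apply cpt, continuity_pt_plus; apply continuity_pt_mult;
    try apply cpt_const; apply ptc. apply gauss_cont. apply g4_cont. }
  apply Rle_trans with (RInt (fun x => c1 * gauss x + c2 * g4 x) a b).
  apply Rle_trans with (RInt (fun x => Rabs (fr r x - fr s x)) a b).
  apply abs_RInt_le; auto. apply exR; auto.
  apply RInt_le; auto.
  apply exR. intros x. apply cpt. apply (continuity_pt_comp (fun x => fr r x - fr s x) Rabs).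
  apply ptc; auto. apply Rcontinuity_abs.
  apply exR; auto.
  intros x _. unfold fr. rewrite <- Rmult_minus_distr_l, Rabs_mult.
  rewrite (Rabs_right (gauss x)) by (apply Rle_ge, Rlt_le, gauss_pos).
  pose proof (tanh_lip (r - sqrt r * x) (s - sqrt s * x)).
  replace (r - sqrt r * x - (s - sqrt s * x)) with ((r - s) + - ((sqrt r - sqrt s) * x)) in H by ring.
  pose proof (Rabs_triang (r - s) (- ((sqrt r - sqrt s) * x))).
  rewrite Rabs_Ropp, Rabs_mult in H0. fold c1 c2 in H0.
  pose proof (absx_gauss x). pose proof (gauss_pos x).
  pose proof (Rabs_pos x). assert (0 <= c2) by apply Rabs_pos.
  assert (gauss x * Rabs (tanh (r - sqrt r * x) - tanh (s - sqrt s * x)) <= gauss x * (c1 + c2 * Rabs x)).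
  { apply Rmult_le_compat_l; lra. }
  nra.
  rewrite RInt_plusR, RInt_scalR, RInt_scalR.
  pose proof (gauss_int_le1 a b Hab). pose proof (g4_int_le a b Hab).
  assert (0 <= c1) by apply Rabs_pos. assert (0 <= c2) by apply Rabs_pos.
  assert (c1 * RInt gauss a b <= c1 * 1) by (apply Rmult_le_compat_l; auto).
  assert (c2 * RInt g4 a b <= c2 * sqrt 2) by (apply Rmult_le_compat_l; auto).
  lra.
  apply exR, g4_cont. apply exR, gauss_cont.
  apply exR; intros x; apply cpt, continuity_pt_mult. apply cpt_const. apply ptc, gauss_cont.
  apply exR; intros x; apply cpt, continuity_pt_mult. apply cpt_const. apply ptc, g4_cont.
Qed.

Lemma L0 : L 0 = 0.
Proof.
  apply Rabs_eq_0. apply Rle_antisym. 2: apply Rabs_pos.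
  apply (imp_abs_bound (fr 0)). apply L_spec.
  intros a b _. rewrite (RInt_ext _ (fun _ => 0)). rewrite RInt_const.
  change (scal (b - a) 0) with ((b - a) * 0). rewrite Rmult_0_r, Rabs_R0. lra.
  intros x _. unfold fr. rewrite sqrt_0. req. replace (0 - 0 * x) with 0 by ring. rewrite tanh_0. ring.
Qed.

Lemma sqrt_cont_all r : continuity_pt sqrt r.
Proof.
  destruct (Rle_dec 0 r). apply continuity_pt_sqrt; auto.
  apply (continuity_pt_locally_ext (fun _ => 0) sqrt (- r)). lra.
  intros y Hy. unfold Rdist in Hy. apply Rabs_lt_between in Hy. rewrite sqrt_neg_0. auto. lra.
  apply cpt_const.
Qed.

Lemma L_cont r : continuity_pt L r.
Proof.
  intros eps Heps.
  assert (Hs : 0 < sqrt 2) by (apply sqrt_lt_R0; lra).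
  destruct (sqrt_cont_all r (eps / (2 * sqrt 2))) as [d1 [Hd1 Hd]].
  { apply Rdiv_lt_0_compat; lra. }
  exists (Rmin d1 (eps / 2)). split. apply Rmin_pos; lra.
  intros y [_ Hy]. simpl in *. unfold R_dist in *.
  pose proof (Rmin_l d1 (eps/2)). pose proof (Rmin_r d1 (eps/2)).
  assert (H1 : Rabs (sqrt y - sqrt r) < eps / (2 * sqrt 2)).
  { destruct (Req_dec y r) as [->|Hne]. unfold Rminus. rewrite Rplus_opp_r, Rabs_R0.
    apply Rdiv_lt_0_compat; lra.
    apply Hd. split. split. exact I. auto. lra. }
  pose proof (L_lip y r).
  assert (sqrt 2 * Rabs (sqrt y - sqrt r) <= sqrt 2 * (eps / (2 * sqrt 2))).
  { apply Rmult_le_compat_l; lra. }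
  replace (sqrt 2 * (eps / (2 * sqrt 2))) with (eps / 2) in H3 by (field; lra).
  lra.
Qed.

Lemma Rmin_alt a b : Rmin a b = (a + b - Rabs (a - b)) / 2.
Proof.
  unfold Rmin. destruct (Rle_dec a b).
  rewrite Rabs_left1 by lra. field.
  rewrite Rabs_right by lra. field.
Qed.

Lemma cont_Rmin (f g : R -> R) x : continuity_pt f x -> continuity_pt g x ->
  continuity_pt (fun y => Rmin (f y) (g y)) x.
Proof.
  intros Hf Hg.
  apply (continuity_pt_ext (fun y => (f y + g y - Rabs (f y - g y)) / 2)).
  intros; symmetry; apply Rmin_alt.
  apply continuity_pt_div. 3: lra. 2: apply cpt_const.
  apply continuity_pt_minus. apply continuity_pt_plus; auto.
  apply (continuity_pt_comp (fun y => f y - g y) Rabs).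
  apply continuity_pt_minus; auto. apply Rcontinuity_abs.
Qed.

Section K.
Variables (s d : R) (Hs : 0 < s) (Hd : 0 < d).

Lemma rho0_pos : 0 < d / (1 + s).
Proof. apply Rdiv_lt_0_compat; lra. Qed.

Lemma phi_le1 r : phi_inv s d r <= 1.
Proof.
  unfold phi_inv. destruct (Rlt_dec r (d / (1 + s))). lra.
  pose proof rho0_pos.
  assert (Hr : d <= (1 + s) * r).
  { apply Rnot_lt_le in n. apply Rmult_le_compat_l with (r := 1 + s) in n. 2: lra.
    replace ((1 + s) * (d / (1 + s))) with d in n by (field; lra). lra. }
  assert (d / r <= 1 + s). { apply Rmult_le_reg_r with r. lra. unfold Rdiv. rewrite Rmult_assoc, Rinv_l, Rmult_1_r. lra. lra. }
  lra.
Qed.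

Lemma phi_neg r : d / s <= r -> phi_inv s d r <= 0.
Proof.
  intros Hr. unfold phi_inv.
  assert (d / (1 + s) < d / s). { apply Rmult_lt_compat_l. lra. apply Rinv_lt_contravar; nra. }
  destruct (Rlt_dec r (d / (1 + s))). lra.
  assert (Hr' : d <= s * r).
  { apply Rmult_le_compat_l with (r := s) in Hr. 2: lra.
    replace (s * (d / s)) with d in Hr by (field; lra). lra. }
  assert (0 < r). { pose proof (Rdiv_lt_0_compat d s Hd Hs). lra. }
  assert (d / r <= s). { apply Rmult_le_reg_r with r. lra. unfold Rdiv. rewrite Rmult_assoc, Rinv_l, Rmult_1_r. lra. lra. }
  lra.
Qed.

Lemma phi_cont r : continuity_pt (phi_inv s d) r.
Proof.
  pose proof rho0_pos.
  destruct (Rlt_dec r (d / (1 + s))).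
  - apply (continuity_pt_locally_ext (fun _ => 1) _ (d / (1 + s) - r)). lra.
    intros y Hy. unfold Rdist in Hy. apply Rabs_lt_between in Hy.
    unfold phi_inv. destruct (Rlt_dec y (d / (1 + s))). auto. lra.
    apply cpt_const.
  - apply (continuity_pt_locally_ext (fun y => Rmin 1 (d / y - s)) _ r). lra.
    intros y Hy. unfold Rdist in Hy. apply Rabs_lt_between in Hy.
    assert (Hy0 : 0 < y) by lra.
    unfold phi_inv. destruct (Rlt_dec y (d / (1 + s))).
    + apply Rmin_left.
      assert (d / y > 1 + s).
      { apply Rmult_lt_reg_r with y. lra. unfold Rdiv. rewrite Rmult_assoc, Rinv_l, Rmult_1_r by lra.
        apply Rmult_lt_compat_l with (r := 1 + s) in r0. 2: lra.
        replace ((1 + s) * (d / (1 + s))) with d in r0 by (field; lra). lra. }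
      lra.
    + apply Rmin_right.
      assert (d / y <= 1 + s).
      { apply Rmult_le_reg_r with y. lra. unfold Rdiv. rewrite Rmult_assoc, Rinv_l, Rmult_1_r by lra.
        apply Rnot_lt_le in n0. apply Rmult_le_compat_l with (r := 1 + s) in n0. 2: lra.
        replace ((1 + s) * (d / (1 + s))) with d in n0 by (field; lra). lra. }
      lra.
    + apply cont_Rmin. apply cpt_const. apply ptc, cder. auto_derive. lra.
Qed.

Definition kf r := phi_inv s d r - psi_opt_B s d r.

Lemma mmse_cont r : continuity_pt mmse_B r.
Proof.
  change mmse_B with (fun r => 1 - L r). apply continuity_pt_minus. apply cpt_const. apply L_cont.
Qed.

Lemma kf_cont r : continuity_pt kf r.
Proof.
  unfold kf, psi_opt_B. apply continuity_pt_minus. apply phi_cont.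
  apply cont_Rmin. apply phi_cont. apply mmse_cont.
Qed.

Lemma kf_nonneg r : 0 <= kf r.
Proof. unfold kf, psi_opt_B. pose proof (Rmin_l (phi_inv s d r) (mmse_B r)). lra. Qed.

Lemma mmse_eq r : mmse_B r = 1 - L r.
Proof. reflexivity. Qed.

Lemma kf_zero r : d / s <= r -> kf r = 0.
Proof.
  intros Hr. unfold kf, psi_opt_B. rewrite Rmin_left. ring.
  rewrite mmse_eq. pose proof (L_le1 r). pose proof (phi_neg r Hr). lra.
Qed.

Lemma kf_le r : kf r <= Rabs (L r).
Proof.
  unfold kf, psi_opt_B. rewrite mmse_eq. pose proof (phi_le1 r). pose proof (Rle_abs (L r)).
  unfold Rmin. destruct (Rle_dec (phi_inv s d r) (1 - L r)); pose proof (Rabs_pos (L r)); lra.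
Qed.

End K.

Lemma L_small r : 0 <= r -> Rabs (L r) <= r + sqrt 2 * sqrt r.
Proof.
  intros Hr. pose proof (L_lip r 0). rewrite L0, sqrt_0, !Rminus_0_r in H.
  rewrite (Rabs_right r), (Rabs_right (sqrt r)) in H. auto.
  apply Rle_ge, sqrt_pos. lra.
Qed.

Lemma kf_cont' s d x : 0 < s -> 0 < d -> continuous (kf s d) x.
Proof. intros. apply cpt, kf_cont; auto. Qed.

Lemma kint s d : 0 < s -> 0 < d -> improper_int_0_inf (kf s d) (RInt (kf s d) 0 (d / s)).
Proof.
  intros Hs Hd. split.
  - intros b _. eexists. apply Rint_of, exR. intros; apply kf_cont'; auto.
  - intros eps Heps. exists (d / s). intros b v Hb Hv. apply Rint_val in Hv. subst v.
    rewrite <- (RInt_ChaslesR (kf s d) 0 (d / s) b).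
    rewrite (RInt_ext (kf s d) (fun _ => 0) (d / s) b).
    rewrite RInt_const. change (scal (b - d / s) 0) with ((b - d / s) * 0).
    rewrite Rmult_0_r, Rplus_0_r. unfold Rminus. rewrite Rplus_opp_r, Rabs_R0. auto.
    intros x Hx. rewrite Rmin_left, Rmax_right in Hx by lra. apply kf_zero; auto. lra.
    all: apply exR; intros; apply kf_cont'; auto.
Qed.

Lemma imp0_unique (f : R -> R) l1 l2 : improper_int_0_inf f l1 -> improper_int_0_inf f l2 -> l1 = l2.
Proof.
  intros [H0 H1] [_ H2]. apply NNPP. intros Hne.
  assert (Hp : 0 < Rabs (l1 - l2) / 2).
  { apply Rdiv_lt_0_compat. apply Rabs_pos_lt. lra. lra. }
  destruct (H1 _ Hp) as [M1 HM1]. destruct (H2 _ Hp) as [M2 HM2].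
  set (b := Rmax (Rmax M1 M2) 0).
  assert (M1 <= b /\ M2 <= b /\ 0 <= b) as [h1 [h2 h3]].
  { unfold b. pose proof (Rmax_l (Rmax M1 M2) 0). pose proof (Rmax_r (Rmax M1 M2) 0).
    pose proof (Rmax_l M1 M2). pose proof (Rmax_r M1 M2). lra. }
  destruct (H0 b h3) as [v Hv].
  pose proof (HM1 b v h1 Hv) as A1. pose proof (HM2 b v h2 Hv) as A2.
  pose proof (Rabs_triang (l1 - v) (v - l2)) as A3.
  replace (l1 - v + (v - l2)) with (l1 - l2) in A3 by ring.
  rewrite (Rabs_minus_sym l1 v) in A3. lra.
Qed.

Lemma aB_spec s d : 0 < s -> 0 < d -> improper_int_0_inf (kf s d) (a_B s d).
Proof.
  intros Hs Hd. unfold a_B, int_0_inf. apply epsilon_spec. eexists. apply kint; auto.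
Qed.

Lemma aB_bound s d : 0 < s -> 0 < d ->
  0 <= a_B s d <= (d / s) * (d / s + sqrt 2 * sqrt (d / s)).
Proof.
  intros Hs Hd.
  rewrite (imp0_unique _ _ _ (aB_spec s d Hs Hd) (kint s d Hs Hd)).
  assert (HM : 0 < d / s) by (apply Rdiv_lt_0_compat; auto).
  split.
  - apply RInt_nonneg. intros; apply kf_nonneg; auto. intros; apply kf_cont'; auto. lra.
  - apply Rle_trans with (RInt (fun _ => d / s + sqrt 2 * sqrt (d / s)) 0 (d / s)).
    apply RInt_le. lra. apply exR; intros; apply kf_cont'; auto. apply exR; intros; apply cpt, cpt_const.
    intros x Hx. apply Rle_trans with (Rabs (L x)). apply kf_le; auto.
    apply Rle_trans with (x + sqrt 2 * sqrt x). apply L_small. lra.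
    assert (sqrt x <= sqrt (d / s)) by (apply sqrt_le_1_alt; lra).
    assert (0 <= sqrt 2) by apply sqrt_pos.
    assert (sqrt 2 * sqrt x <= sqrt 2 * sqrt (d / s)) by (apply Rmult_le_compat_l; auto). lra.
    rewrite RInt_const. change (scal ?a ?b) with (a * b). right. ring.
Qed.

Lemma lim_aB s : 0 < s ->
  limit1_in (fun delta => a_B s delta / (2 * delta)) (fun delta => 0 < delta) 0 0.
Proof.
  intros Hs eps Heps.
  set (w := 2 * s * eps / 3).
  assert (Hw : 0 < w) by (unfold w; apply Rdiv_lt_0_compat; nra).
  exists (s * Rmin 1 (w * w)). split.
  { apply Rmult_lt_0_compat; auto. apply Rmin_pos; nra. }
  intros x [Hx Hxa]. simpl in *. unfold R_dist in *. rewrite Rminus_0_r in *.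
  rewrite Rabs_right in Hxa by lra.
  set (u := x / s).
  assert (Hu : 0 < u) by (unfold u; apply Rdiv_lt_0_compat; auto).
  assert (Hu1 : u < Rmin 1 (w * w)).
  { unfold u. apply Rmult_lt_reg_l with s. auto. replace (s * (x / s)) with x by (field; lra). auto. }
  pose proof (Rmin_l 1 (w * w)). pose proof (Rmin_r 1 (w * w)).
  pose proof (aB_bound s x Hs Hx) as [B1 B2]. fold u in B2.
  pose proof (sqrt_sqrt u (Rlt_le _ _ Hu)) as Hsu. pose proof (sqrt_pos u).
  pose proof sqrt2_sq. pose proof (sqrt_pos 2).
  assert (Hs2 : sqrt 2 < 2) by nra.
  assert (Hsw : sqrt u < w) by nra.
  assert (Hus : u <= sqrt u) by nra.
  assert (Hb : u + sqrt 2 * sqrt u <= 3 * sqrt u) by nra.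
  assert (Hq : a_B s x / (2 * x) <= u * (3 * sqrt u) / (2 * x)).
  { unfold Rdiv. apply Rmult_le_compat_r. left. apply Rinv_0_lt_compat. lra.
    apply Rle_trans with (u * (u + sqrt 2 * sqrt u)). auto. apply Rmult_le_compat_l; lra. }
  replace (u * (3 * sqrt u) / (2 * x)) with (3 * sqrt u / (2 * s)) in Hq.
  2: { unfold u. field. lra. }
  assert (0 <= a_B s x / (2 * x)) by (apply Rdiv_le_0_compat; lra).
  rewrite Rabs_right by lra.
  apply Rle_lt_trans with (3 * sqrt u / (2 * s)). auto.
  apply Rmult_lt_reg_r with (2 * s). lra.
  unfold Rdiv. rewrite Rmult_assoc, Rinv_l, Rmult_1_r by lra.
  unfold w in Hsw. lra.
Qed.

Theorem theorem1 (sigma2 : R) (Hs : 0 < sigma2) :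
  (forall rho, 0 <= rho ->
     improper_int_R (fun x => gauss x * tanh (rho - sqrt rho * x))
                    (1 - mmse_B rho)) /\
  (forall delta, 0 < delta ->
     improper_int_0_inf
       (fun rho => phi_inv sigma2 delta rho - psi_opt_B sigma2 delta rho)
       (a_B sigma2 delta)) /\
  limit1_in (fun delta => a_B sigma2 delta / (2 * delta))
            (fun delta => 0 < delta) 0 0 /\
  limit1_in (fun delta => R_AC sigma2 delta)
            (fun delta => 0 < delta) (C_G sigma2) 0.
Proof.
  split; [|split; [|split]].
  - intros rho _. rewrite mmse_eq. replace (1 - (1 - L rho)) with (L rho) by ring.
    exact (L_spec rho).
  - intros delta Hd. exact (aB_spec sigma2 delta Hs Hd).
  - apply lim_aB; auto.
  - intros eps Heps. destruct (lim_aB sigma2 Hs eps Heps) as [al [Hal H]].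
    exists al. split; auto. intros x Hx. specialize (H x Hx).
    simpl in *. unfold R_dist in *. unfold R_AC.
    replace (C_G sigma2 - a_B sigma2 x / (2 * x) - C_G sigma2) with (- (a_B sigma2 x / (2 * x) - 0)) by ring.
    rewrite Rabs_Ropp. auto.
Qed.
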